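(* Let $G$ be a group with the unique root property. Let $\varphi_1:H_1\to H_1'$ and $\varphi_2:H_2\to H_2'$ be isomorphisms between subgroups of finite index in $G$. Suppose that $H_2$ is a normal subgroup of $G$ and that $\varphi_1|_{H_1\cap H_2}=\varphi_2|_{H_1\cap H_2}$. Then there exists an isomorphism $\varphi:H_1H_2\to H_1'H_2'$ with $\varphi|_{H_1}=\varphi_1$ and $\varphi|_{H_2}=\varphi_2$.
   Context: A group $G$ has the unique root property if for all $x,y\in G$ and every positive integer $n$, $x^n=y^n$ implies $x=y$. *)

(* Defs.v *)
From Stdlib Require Import List.
Import ListNotations.

Section GroupDefs.
Context {G : Type} (mul : G -> G -> G) (one : G) (inv : G -> G).

Definition is_group : Prop :=
  (forall x y z, mul x (mul y z) = mul (mul x y) z) /\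
  (forall x, mul one x = x) /\ (forall x, mul x one = x) /\
  (forall x, mul (inv x) x = one) /\ (forall x, mul x (inv x) = one).

Fixpoint gpow (x : G) (n : nat) : G :=
  match n with O => one | S k => mul x (gpow x k) end.

Definition unique_root_property : Prop :=
  forall (x y : G) (n : nat), 0 < n -> gpow x n = gpow y n -> x = y.

Definition is_subgroup (H : G -> Prop) : Prop :=
  H one /\ (forall x y, H x -> H y -> H (mul x y)) /\ (forall x, H x -> H (inv x)).

Definition finite_index (H : G -> Prop) : Prop :=
  exists s : list G, forall x : G, exists g, In g s /\ H (mul (inv g) x).

Definition is_normal (H : G -> Prop) : Prop :=
  forall g h, H h -> H (mul (mul g h) (inv g)).

Definition setmul (H K : G -> Prop) : G -> Prop :=
  fun x => exists h k, H h /\ K k /\ x = mul h k.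

Definition is_iso_between (phi : G -> G) (A B : G -> Prop) : Prop :=
  (forall x, A x -> B (phi x)) /\
  (forall x y, A x -> A y -> phi (mul x y) = mul (phi x) (phi y)) /\
  (forall x y, A x -> A y -> phi x = phi y -> x = y) /\
  (forall y, B y -> exists x, A x /\ phi x = y).
End GroupDefs.

(* Main.v *)
Require Import Defs.
From Stdlib Require Import List Arith Lia Classical ClassicalEpsilon.
Import ListNotations.

Theorem lemma2p6 (G : Type) (mul : G -> G -> G) (one : G) (inv : G -> G)
  (HG : is_group mul one inv) (Hroot : unique_root_property mul one)
  (H1 H1' H2 H2' : G -> Prop)
  (sH1 : is_subgroup mul one inv H1) (sH1' : is_subgroup mul one inv H1')
  (sH2 : is_subgroup mul one inv H2) (sH2' : is_subgroup mul one inv H2')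
  (fH1 : finite_index mul inv H1) (fH1' : finite_index mul inv H1')
  (fH2 : finite_index mul inv H2) (fH2' : finite_index mul inv H2')
  (phi1 phi2 : G -> G)
  (iso1 : is_iso_between mul phi1 H1 H1') (iso2 : is_iso_between mul phi2 H2 H2')
  (nH2 : is_normal mul inv H2)
  (agree : forall x, H1 x -> H2 x -> phi1 x = phi2 x) :
  exists phi : G -> G,
    is_iso_between mul phi (setmul mul H1 H2) (setmul mul H1' H2') /\
    (forall x, H1 x -> phi x = phi1 x) /\
    (forall x, H2 x -> phi x = phi2 x).
Proof.
  destruct HG as (assoc & idl & idr & invl & invr).
  assert (assocR : forall x y z, mul (mul x y) z = mul x (mul y z)) by (intros; now rewrite assoc).
  assert (c1 : forall x y, mul (inv x) (mul x y) = y) by (intros; now rewrite assoc, invl, idl).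
  assert (c2 : forall x y, mul x (mul (inv x) y) = y) by (intros; now rewrite assoc, invr, idl).
  assert (cancl : forall a x y, mul a x = mul a y -> x = y).
  { intros a x y E. rewrite <- (c1 a x), <- (c1 a y), E. reflexivity. }
  assert (cancr : forall a x y, mul x a = mul y a -> x = y).
  { intros a x y E. rewrite <- (idr x), <- (idr y), <- (invr a), !assoc, E. reflexivity. }
  assert (inv_uniq : forall x y, mul x y = one -> inv x = y).
  { intros x y E. apply (cancl x). now rewrite invr, E. }
  assert (inv_inv : forall x, inv (inv x) = x).
  { intros x. apply inv_uniq. apply invl. }
  assert (inv_mul : forall x y, inv (mul x y) = mul (inv y) (inv x)).
  { intros x y. apply inv_uniq. rewrite !assocR, c2. apply invr. }
  assert (inv_one : inv one = one) by (apply inv_uniq; apply idl).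
  assert (pow_add : forall x i j, gpow mul one x (i + j) = mul (gpow mul one x i) (gpow mul one x j)).
  { intros x i j; induction i; simpl. now rewrite idl. now rewrite IHi, assoc. }
  assert (pow_conj : forall k h m, gpow mul one (mul (mul (inv k) h) k) m
                                   = mul (mul (inv k) (gpow mul one h m)) k).
  { intros k h m; induction m; simpl. now rewrite idr, invl.
    rewrite IHm, !assocR, c2. reflexivity. }
  assert (sub_pow : forall H, is_subgroup mul one inv H -> forall x m, H x -> H (gpow mul one x m)).
  { intros H [h1 [hm hi]] x m Hx; induction m; simpl; auto. }
  assert (hom_one : forall phi A B, is_subgroup mul one inv A -> is_iso_between mul phi A B -> phi one = one).
  { intros phi A B [a1 _] [_ [hm _]]. apply (cancl (phi one)). rewrite <- hm by auto. now rewrite idl, idr. }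
  assert (hom_inv : forall phi A B, is_subgroup mul one inv A -> is_iso_between mul phi A B ->
            forall x, A x -> phi (inv x) = inv (phi x)).
  { intros phi A B sA iA x Ax. symmetry. apply inv_uniq.
    pose proof iA as [_ [hm _]]. pose proof sA as [a1 [am ai]].
    rewrite <- hm by auto. rewrite invr. eapply hom_one; eauto. }
  assert (hom_pow : forall phi A B, is_subgroup mul one inv A -> is_iso_between mul phi A B ->
            forall x m, A x -> phi (gpow mul one x m) = gpow mul one (phi x) m).
  { intros phi A B sA iA x m Ax. induction m; simpl. eapply hom_one; eauto.
    destruct iA as [bi [hm _]]. rewrite hm; auto. now rewrite IHm. eapply sub_pow; eauto. }
  assert (fin_pow : forall H, is_subgroup mul one inv H -> finite_index mul inv H ->
            forall g, exists m, 0 < m /\ H (gpow mul one g m)).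
  { intros H sH [s Hs] g. apply NNPP; intro Hno.
    assert (P : forall N, exists l, length l = N /\ NoDup l /\ incl l s /\
                 forall r, In r l -> exists i, i < N /\ H (mul (inv r) (gpow mul one g i))).
    { induction N.
      - exists []. repeat split; try constructor; try (intros r Hr; inversion Hr).
      - destruct IHN as (l & Hlen & Hnd & Hinc & Hrep).
        destruct (Hs (gpow mul one g N)) as (r & Hrs & Hr).
        exists (r :: l). repeat split.
        + simpl; now rewrite Hlen.
        + constructor; auto. intro Hin. destruct (Hrep r Hin) as (i & Hi & Hri).
          apply Hno. exists (N - i). split. lia.
          destruct sH as [_ [hm hi]].
          assert (E : mul (inv (mul (inv r) (gpow mul one g i))) (mul (inv r) (gpow mul one g N))
                      = gpow mul one g (N - i)).
          { rewrite inv_mul, inv_inv, assocR, c2.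
            replace N with (i + (N - i)) at 1 by lia. now rewrite pow_add, c1. }
          rewrite <- E. apply hm; auto.
        + intros y [<-|Hy]; auto.
        + intros y [<-|Hy]. exists N; split; auto.
          destruct (Hrep y Hy) as (i & Hi & Hyi). exists i; split; auto. }
    destruct (P (S (length s))) as (l & Hlen & Hnd & Hinc & _).
    pose proof (NoDup_incl_length Hnd Hinc). lia. }
  destruct sH1 as [h1one [h1m h1i]]. destruct sH2 as [h2one [h2m h2i]].
  assert (sH1 : is_subgroup mul one inv H1) by (split; auto).
  assert (sH2 : is_subgroup mul one inv H2) by (split; auto).
  destruct iso1 as [i1B [i1m [i1inj i1s]]]. destruct iso2 as [i2B [i2m [i2inj i2s]]].
  assert (iso1 : is_iso_between mul phi1 H1 H1') by (repeat split; auto).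
  assert (iso2 : is_iso_between mul phi2 H2 H2') by (repeat split; auto).
  assert (conj : forall k h, H1 k -> H2 h ->
            phi2 (mul (mul (inv k) h) k) = mul (mul (inv (phi1 k)) (phi2 h)) (phi1 k)).
  { intros k h Hk Hh.
    assert (Hc : forall x, H2 x -> H2 (mul (mul (inv k) x) k)).
    { intros x Hx. pose proof (nH2 (inv k) x Hx) as T. now rewrite inv_inv in T. }
    destruct (fin_pow H1 sH1 fH1 h) as (m & Hm & Hhm).
    apply (Hroot _ _ m Hm).
    rewrite <- hom_pow with (A := H2) (B := H2') by auto.
    rewrite (pow_conj k), (pow_conj (phi1 k)), <- (hom_pow phi2 H2 H2' sH2 iso2 h m Hh).
    assert (Hhm2 : H2 (gpow mul one h m)) by (apply sub_pow; auto).
    rewrite <- (agree _ Hhm Hhm2).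
    rewrite <- agree by first [apply Hc; auto | repeat apply h1m; auto].
    rewrite !i1m by (auto; apply h1m; auto).
    rewrite hom_inv with (A := H1) (B := H1') by auto.
    reflexivity. }
  assert (cross : forall a b, H1 a -> H2 b -> phi1 a = phi2 b -> a = b).
  { intros a b Ha Hb E. destruct (fin_pow H2 sH2 fH2 a) as (m & Hm & Ham).
    apply (Hroot _ _ m Hm). apply i2inj; [auto | apply sub_pow; auto |].
    rewrite <- (agree _ (sub_pow H1 sH1 a m Ha) Ham).
    rewrite !hom_pow with (A := H1) (B := H1') by auto.
    rewrite hom_pow with (A := H2) (B := H2') by auto. now rewrite E. }
  assert (WD : forall a b c d, H1 a -> H2 b -> H1 c -> H2 d -> mul a b = mul c d ->
            mul (phi1 a) (phi2 b) = mul (phi1 c) (phi2 d)).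
  { intros a b c d Ha Hb Hc Hd E.
    assert (Z : mul (inv c) a = mul d (inv b)).
    { apply (cancl c). apply (cancr b). rewrite c2, !assocR, invl, idr. exact E. }
    assert (Z1 : H1 (mul (inv c) a)) by auto.
    assert (Z2 : H2 (mul (inv c) a)) by (rewrite Z; auto).
    pose proof (agree _ Z1 Z2) as A. rewrite Z in A at 2.
    rewrite i1m, i2m, hom_inv with (A := H1) (B := H1'), hom_inv with (A := H2) (B := H2') in A by auto.
    apply (cancl (inv (phi1 c))). rewrite c1, assoc, A, !assocR, invl, idr. reflexivity. }
  set (P := fun g (p : G * G) => H1 (fst p) /\ H2 (snd p) /\ g = mul (fst p) (snd p)).
  set (pick := fun g => epsilon (inhabits (one, one)) (P g)).
  set (phi := fun g => mul (phi1 (fst (pick g))) (phi2 (snd (pick g)))).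
  assert (phiE : forall a b, H1 a -> H2 b -> phi (mul a b) = mul (phi1 a) (phi2 b)).
  { intros a b Ha Hb. unfold phi, pick.
    destruct (epsilon_spec (inhabits (one, one)) (P (mul a b))) as (Q1 & Q2 & Q3).
    { exists (a, b). unfold P; simpl; auto. }
    apply WD; auto. }
  exists phi. split; [|split].
  - split; [|split; [|split]].
    + intros x (a & b & Ha & Hb & ->). rewrite phiE by auto. exists (phi1 a), (phi2 b). auto.
    + intros x y (a & b & Ha & Hb & ->) (c & d & Hc & Hd & ->).
      assert (E : mul (mul a b) (mul c d) = mul (mul a c) (mul (mul (mul (inv c) b) c) d)).
      { rewrite !assocR, c2. reflexivity. }
      assert (Hb' : H2 (mul (mul (inv c) b) c)).
      { pose proof (nH2 (inv c) b Hb) as T. now rewrite inv_inv in T. }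
      rewrite E, !phiE by auto. rewrite i1m, i2m, conj by auto.
      rewrite !assocR, c2. reflexivity.
    + intros x y (a & b & Ha & Hb & ->) (c & d & Hc & Hd & ->). rewrite !phiE by auto. intro E.
      assert (Z : mul (inv (phi1 c)) (phi1 a) = mul (phi2 d) (inv (phi2 b))).
      { apply (cancl (phi1 c)). apply (cancr (phi2 b)). rewrite c2, !assocR, invl, idr. exact E. }
      rewrite <- hom_inv with (A := H1) (B := H1'), <- hom_inv with (A := H2) (B := H2'),
        <- i1m, <- i2m in Z by auto.
      apply cross in Z; auto.
      apply (cancl (inv c)). apply (cancr (inv b)). rewrite !assocR, invr, idr, c1. exact Z.
    + intros y (a & b & Ha & Hb & ->).
      destruct (i1s a Ha) as (x1 & Hx1 & <-). destruct (i2s b Hb) as (x2 & Hx2 & <-).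
      exists (mul x1 x2). split. exists x1, x2; auto. apply phiE; auto.
  - intros x Hx. rewrite <- (idr x) at 1. rewrite phiE by auto.
    rewrite (hom_one phi2 H2 H2') by auto. apply idr.
  - intros x Hx. rewrite <- (idl x) at 1. rewrite phiE by auto.
    rewrite (hom_one phi1 H1 H1') by auto. apply idl.
Qed.
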